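(* For every positive integer $m$ and every orthogonality graph $G$ in $\mathbb{S}^{d-1}$, the blow-up graph $G^{m}$ is an orthogonality graph in $\mathbb{S}^{2d-1}$.
   Context: $\mathbb{S}^{d-1}\subseteq\mathbb{R}^d$ is the set of unit vectors. A graph $G$ is an orthogonality graph in $S\subseteq\mathbb{R}^d$ if there is an injective map from $V(G)$ to $S$ such that adjacent vertices are mapped to orthogonal vectors (the representation need not be faithful). For a graph $G$ and positive integer $m$, the blow-up $G^m$ is obtained from $G$ by replacing each vertex by an independent set of size $m$ and each edge by a complete bipartite graph $K_{m,m}$ between the two corresponding independent sets. *)

(* Defs.v *)
From HB Require Import structures.
From mathcomp Require Import all_boot all_order all_algebra.
From mathcomp Require Import reals.
Set Implicit Arguments. Unset Strict Implicit. Unset Printing Implicit Defensive.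
Import Order.TTheory GRing.Theory Num.Theory.
Local Open Scope ring_scope.

Definition dotv (R : realType) (n : nat) (u v : 'rV[R]_n) : R :=
  \sum_(i < n) u 0 i * v 0 i.

Definition on_sphere (R : realType) (n : nat) (u : 'rV[R]_n) : Prop :=
  dotv u u = 1.

(* A (simple) graph on vertex set V, given by its adjacency relation adj,
   is an orthogonality graph in S^{n-1}: there is an injective map into the
   unit sphere sending adjacent vertices to orthogonal vectors
   (the representation need not be faithful). *)
Definition orth_graph_in_sphere (R : realType) (n : nat) (V : finType)
    (adj : rel V) : Prop :=
  exists f : V -> 'rV[R]_n,
    [/\ injective f,
        forall x, on_sphere (f x)
      & forall x y, adj x y -> dotv (f x) (f y) = 0].

Definition blowup (V : finType) (m : nat) (adj : rel V) : rel (V * 'I_m) :=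
  fun x y => adj x.1 y.1.

(* Main.v *)
Require Import Defs.
From HB Require Import structures.
From mathcomp Require Import all_boot all_order all_algebra.
From mathcomp Require Import reals.
From mathcomp Require Import ring lra.
Set Implicit Arguments. Unset Strict Implicit. Unset Printing Implicit Defensive.
Import Order.TTheory GRing.Theory Num.Theory.
Local Open Scope ring_scope.

Lemma dotv_cast (R : realType) n n' (e : n = n') (u v : 'rV[R]_n) :
  dotv (castmx (erefl, e) u) (castmx (erefl, e) v) = dotv u v.
Proof. by subst n'; rewrite !castmx_id. Qed.

Lemma dotv_row (R : realType) n (u1 u2 v1 v2 : 'rV[R]_n) :
  dotv (row_mx u1 u2) (row_mx v1 v2) = dotv u1 v1 + dotv u2 v2.
Proof.
rewrite /dotv big_split_ord /=.
by congr (_ + _); apply: eq_bigr => i _; rewrite ?row_mxEl ?row_mxEr.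
Qed.

Lemma dotv_scale (R : realType) n (a b : R) (u v : 'rV[R]_n) :
  dotv (a *: u) (b *: v) = a * b * dotv u v.
Proof.
rewrite /dotv mulr_sumr; apply: eq_bigr => i _; rewrite !mxE; ring.
Qed.

Lemma dotv_scalel (R : realType) n (a : R) (u v : 'rV[R]_n) :
  dotv (a *: u) v = a * dotv u v.
Proof.
rewrite /dotv mulr_sumr; apply: eq_bigr => i _; rewrite !mxE; ring.
Qed.

Lemma dotvC (R : realType) n (u v : 'rV[R]_n) : dotv u v = dotv v u.
Proof. by rewrite /dotv; apply: eq_bigr => i _; rewrite mulrC. Qed.

Section Coef.
Variable R : realType.
Definition tt_ (i : nat) : R := (i.+2%:R)^-1.
Definition aa (i : nat) : R := Num.sqrt (1 - tt_ i ^+ 2).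

Lemma tt_pos i : 0 < tt_ i.
Proof. by rewrite /tt_ invr_gt0 ltr0n. Qed.

Lemma tt_lt1 i : tt_ i < 1.
Proof. by rewrite /tt_ invf_lt1 ?ltr0n // ltr1n. Qed.

Lemma aa_pos i : 0 < aa i.
Proof.
rewrite /aa sqrtr_gt0 subr_gt0.
have h0 := tt_pos i; have h1 := tt_lt1 i.
rewrite expr2; nra.
Qed.

Lemma aa_sq i : aa i ^+ 2 + tt_ i ^+ 2 = 1.
Proof.
rewrite /aa sqr_sqrtr; first ring.
have h0 := tt_pos i; have h1 := tt_lt1 i.
rewrite subr_ge0 expr2; nra.
Qed.

Lemma tt_inj : injective tt_.
Proof.
move=> i j /eqP; rewrite /tt_ (inj_eq (@invr_inj _)) eqr_nat => /eqP; by case.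
Qed.
End Coef.

Theorem mainTheorem6 (R : realType) (d m : nat) (V : finType) (adj : rel V) :
  (0 < m)%N -> symmetric adj -> irreflexive adj ->
  @orth_graph_in_sphere R d V adj ->
  @orth_graph_in_sphere R (2 * d) _ (@blowup V m adj).
Proof.
move=> _ _ _ [f [finj fs fo]].
have e : (d + d = 2 * d)%N by rewrite mul2n addnn.
pose F (x : V * 'I_m) : 'rV[R]_(2 * d) :=
  castmx (erefl, e) (row_mx (aa R x.2 *: f x.1) (tt_ R x.2 *: f x.1)).
have dotF x y : dotv (F x) (F y) =
    (aa R x.2 * aa R y.2 + tt_ R x.2 * tt_ R y.2) * dotv (f x.1) (f y.1).
  by rewrite /F dotv_cast dotv_row !dotv_scale mulrDl.
exists F; split.
- move=> [v i] [w j] /= h.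
  have h2 := can_inj (castmxK erefl e) h.
  case/eq_row_mx: h2 => ha hb.
  have c1 : aa R i = aa R j * dotv (f w) (f v).
    have := congr1 (fun u => dotv u (f v)) ha => /=.
    by rewrite !dotv_scalel fs mulr1.
  have c2 : tt_ R i = tt_ R j * dotv (f w) (f v).
    have := congr1 (fun u => dotv u (f v)) hb => /=.
    by rewrite !dotv_scalel fs mulr1.
  set c := dotv (f w) (f v) in c1 c2.
  have sqi := aa_sq R i; have sqj := aa_sq R j.
  have api := aa_pos R i; have apj := aa_pos R j.
  have cpos : 0 < c.
    by move: api; rewrite c1 pmulr_rgt0.
  have c21 : c ^+ 2 = 1.
    by move: sqi; rewrite c1 c2 !exprMn -mulrDl sqj mul1r.
  have c_1 : c = 1.
    have : (c - 1) * (c + 1) = 0 by rewrite -subr_sqr c21 expr1n subrr.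
    move/eqP; rewrite mulf_eq0 => /orP[/eqP|/eqP]; first by move/eqP; rewrite subr_eq0 => /eqP.
    move=> h1; exfalso; have : c + 1 > 0 by lra. by rewrite h1 ltxx.
  rewrite c_1 !mulr1 in c1 c2.
  have ij : i = j by apply: val_inj; apply: tt_inj c2.
  subst j.
  have : f v = f w.
    apply: (@scalerI _ _ (aa R i)); first by rewrite gt_eqF.
    exact: ha.
  by move/finj => ->.
- move=> [v i]; rewrite /on_sphere dotF /= fs mulr1 -!expr2 aa_sq.
  by [].
- move=> [v i] [w j]; rewrite /blowup /= => h.
  by rewrite dotF /= fo // mulr0.
Qed.
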